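(* Let $n\geq1$, $m\geq0$, and let $(v=v^0\sim v^1\sim\dots\sim v^d=u)$ be a geodesic (shortest path) in the dYoke graph $Z_{n,m}$. Then for every $0\leq i\leq m$, all steps of this path that are shifts at $i$ are shifts in the same direction (all left shifts at $i$ or all right shifts at $i$).
   Context: Elements of $\mathbb{Z}_n$ are identified with representatives in $\{0,\dots,n-1\}$. $Z_{n,m}$ has vertices $u=(u_0,\dots,u_{m+1})\in\mathbb{Z}_n\times\{-1,0,1\}^m\times\mathbb{Z}_n$ with $\sum u_i\equiv0\pmod n$. A step from $v$ to $u$ is a left shift at $i$ ($0\le i\le m$) if $u_j=v_j$ for $j\notin\{i,i+1\}$, $u_i=v_i+1$ and $u_{i+1}=v_{i+1}-1$ (a unit moved from entry $i+1$ to entry $i$), and a right shift at $i$ if $u_i=v_i-1$, $u_{i+1}=v_{i+1}+1$; arithmetic in coordinates $0,m+1$ is in $\mathbb{Z}_n$, in coordinates $1,\dots,m$ in $\mathbb{Z}$ (values must remain in $\{-1,0,1\}$). Two vertices are adjacent iff one is obtained from the other by such a shift. *)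

(* Defs.v *)
From HB Require Import structures.
From mathcomp Require Import all_boot all_order all_algebra.
Set Implicit Arguments. Unset Strict Implicit. Unset Printing Implicit Defensive.
Import Order.TTheory GRing.Theory Num.Theory.

(* Vertices of the dYoke graph Z_{n,m} are represented as sequences
   u = [:: u_0; u_1; ...; u_m; u_{m+1}] of integers of size m+2, where
   u_0, u_{m+1} are representatives in {0,...,n-1} of elements of Z_n,
   u_1..u_m are in {-1,0,1}, and the total sum is divisible by n. *)

Local Open Scope ring_scope.

Definition coord (u : seq int) (j : nat) : int := nth 0 u j.

Definition is_vertex (n m : nat) (u : seq int) : Prop :=
  [/\ size u = m.+2,
      0 <= coord u 0 < n%:Z,
      0 <= coord u m.+1 < n%:Z,
      (forall j : nat, (1 <= j <= m)%N -> coord u j \in [:: -1; 0; 1]) &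
      (n%:Z %| \sum_(x <- u) x)%Z].

Definition normc (n m j : nat) (x : int) : int :=
  if (j == 0%N) || (j == m.+1) then (x %% n%:Z)%Z else x.

Definition left_shift (n m i : nat) (v u : seq int) : Prop :=
  [/\ (i <= m)%N,
      (forall j : nat, j != i -> j != i.+1 -> coord u j = coord v j),
      coord u i = normc n m i (coord v i + 1) &
      coord u i.+1 = normc n m i.+1 (coord v i.+1 - 1)].

Definition right_shift (n m i : nat) (v u : seq int) : Prop :=
  [/\ (i <= m)%N,
      (forall j : nat, j != i -> j != i.+1 -> coord u j = coord v j),
      coord u i = normc n m i (coord v i - 1) &
      coord u i.+1 = normc n m i.+1 (coord v i.+1 + 1)].

Definition shift_at (n m i : nat) (v u : seq int) : Prop :=
  left_shift n m i v u \/ right_shift n m i v u.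

Definition adj (n m : nat) (v u : seq int) : Prop :=
  is_vertex n m v /\ is_vertex n m u /\
  exists i : nat, shift_at n m i v u \/ shift_at n m i u v.

Definition is_walk (n m : nat) (p : seq (seq int)) : Prop :=
  p <> [::] /\ (forall x, x \in p -> is_vertex n m x) /\
  (forall k : nat, (k.+1 < size p)%N ->
     adj n m (nth [::] p k) (nth [::] p k.+1)).

Definition is_geodesic (n m : nat) (p : seq (seq int)) : Prop :=
  is_walk n m p /\
  forall q : seq (seq int), is_walk n m q ->
    head [::] q = head [::] p -> last [::] q = last [::] p ->
    (size p <= size q)%N.

(* Main.v *)
Require Import Defs.
From mathcomp Require Import all_boot all_order all_algebra zify.
From Stdlib Require Import Classical.
Import Order.TTheory GRing.Theory Num.Theory.
Local Open Scope ring_scope.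
Local Notation coord := Defs.coord.

Definition upd (h : nat -> int) (j : nat) (s : int) : nat -> int :=
  fun c => if c == j then h c + s else h c.
Definition vertf (n m : nat) (h : nat -> int) (c : nat) : int :=
  if c == 0%N then (h 0%N %% n%:Z)%Z
  else if c == m.+1 then ((- h m) %% n%:Z)%Z else h c - h c.-1.
Definition vert n m h := mkseq (vertf n m h) m.+2.
Definition Lip (m : nat) (h : nat -> int) :=
  forall c, (1 <= c <= m)%N -> -1 <= h c - h c.-1 <= 1.
Definition Dist (m : nat) (a b : nat -> int) : nat :=
  (\sum_(c < m.+1) `|a c - b c|)%N.

Lemma coord_vert n m h c :
  coord (vert n m h) c = if (c < m.+2)%N then vertf n m h c else 0.
Proof.
rewrite /coord /vert; case: ifP => H; first by rewrite nth_mkseq.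
by rewrite nth_default // size_mkseq leqNgt H.
Qed.

Lemma size_vert n m h : size (vert n m h) = m.+2.
Proof. by rewrite size_mkseq. Qed.

Lemma vert_vertex n m h : (1 <= n)%N -> Lip m h -> is_vertex n m (vert n m h).
Proof.
move=> n1 L; split.
- exact: size_vert.
- rewrite coord_vert /= /vertf /=; lia.
- rewrite coord_vert ltnS leqnn /vertf /= eqxx; lia.
- move=> j /andP [j1 jm]; rewrite coord_vert ltnS (leq_trans jm) // /vertf.
  have -> : (j == 0%N) = false by case: j j1 {jm}.
  have -> : (j == m.+1) = false by apply/negbTE; rewrite neq_ltn ltnS jm.
  have := L j; rewrite j1 jm => /(_ isT) H.
  have : h j - h j.-1 = -1 \/ h j - h j.-1 = 0 \/ h j - h j.-1 = 1 by lia.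
  by case=> [->|[->|->]].
- rewrite /vert /mkseq big_map (_ : iota 0 m.+2 = index_iota 0 m.+2) ?/index_iota ?subn0 // -/(index_iota 0 m.+2) big_nat_recr //= big_nat_recl //= /vertf /= eqxx.
  have E : \sum_(0 <= i < m) (if i.+1 == m.+1 then ((- h m) %% n%:Z)%Z else h i.+1 - h i.+1.-1)
         = \sum_(0 <= i < m) (h i.+1 - h i).
    apply: eq_big_nat => i /andP [_ im]; rewrite eqSS.
    by have -> : (i == m) = false by apply/negbTE; rewrite neq_ltn im.
  rewrite E telescope_sumr //.
  rewrite [X in (_ %| X)%Z](_ : _ = - ((h 0%N %/ n%:Z)%Z + ((- h m) %/ n%:Z)%Z) * n%:Z).
    by apply: dvdz_mull; apply: dvdzz.
  have := divz_eq (h 0%N) n%:Z; have := divz_eq (- h m) n%:Z.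
  rewrite mulNr mulrDl; lia.
Qed.

Lemma vert_upd_other n m h j s t : (j <= m)%N -> t != j -> t != j.+1 ->
  coord (vert n m (upd h j s)) t = coord (vert n m h) t.
Proof.
move=> jm tj tj1; rewrite !coord_vert; case: ifP => // _.
rewrite /vertf /upd; case: (t =P 0%N) => [t0|/eqP t0].
  by subst t; rewrite (negbTE tj).
case: (t =P m.+1) => [tm|_].
  by subst t; rewrite (_ : (m == j) = false) //; apply/eqP => E; rewrite E eqxx in tj1.
rewrite (negbTE tj); case: t t0 tj tj1 => // t _ tj tj1 /=.
by rewrite (_ : (t == j) = false) //; apply/eqP => E; rewrite E eqxx in tj1.
Qed.

Lemma vert_upd_j n m h j s : (j <= m)%N ->
  coord (vert n m (upd h j s)) j = normc n m j (coord (vert n m h) j + s).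
Proof.
move=> jm; rewrite !coord_vert ltnS (leq_trans jm) // /vertf /upd /normc.
case: j jm => [|j] jm /=; first by rewrite modzDml.
have -> : (j.+1 == m.+1) = false by apply/negbTE; rewrite neq_ltn ltnS jm.
have -> : (j == j.+1) = false by elim: j {jm}.
rewrite eqxx; lia.
Qed.

Lemma vert_upd_j1 n m h j s : (j <= m)%N ->
  coord (vert n m (upd h j s)) j.+1 = normc n m j.+1 (coord (vert n m h) j.+1 - s).
Proof.
move=> jm; rewrite !coord_vert !ltnS jm /vertf /upd /normc /=.
case: (j.+1 =P m.+1) => [[->]|/eqP jm1] /=.
  by rewrite eqxx modzDml; congr (_ %% _)%Z; lia.
have -> : (j.+1 == j) = false by elim: j {jm jm1}.
rewrite eqxx; lia.
Qed.

Lemma vert_left n m h j : (j <= m)%N ->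
  left_shift n m j (vert n m h) (vert n m (upd h j 1)).
Proof.
move=> jm; split => //; [by move=> t; apply: vert_upd_other | |].
- exact: vert_upd_j.
- exact: vert_upd_j1.
Qed.

Lemma vert_right n m h j : (j <= m)%N ->
  right_shift n m j (vert n m h) (vert n m (upd h j (-1))).
Proof.
move=> jm; split => //; [by move=> t; apply: vert_upd_other | |].
- exact: vert_upd_j.
- by rewrite vert_upd_j1 // opprK.
Qed.

Lemma left_det n m j v u w : left_shift n m j v u -> left_shift n m j v w ->
  size u = size w -> u = w.
Proof.
move=> [jm o1 e1 f1] [_ o2 e2 f2] s; apply: (eq_from_nth (x0 := 0)) => // t _.
have : coord u t = coord w t; last by [].
case: (t =P j) => [->|/eqP tj]; first by rewrite e1 e2.
case: (t =P j.+1) => [->|/eqP tj1]; first by rewrite f1 f2.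
by rewrite o1 ?o2.
Qed.

Lemma right_det n m j v u w : right_shift n m j v u -> right_shift n m j v w ->
  size u = size w -> u = w.
Proof.
move=> [jm o1 e1 f1] [_ o2 e2 f2] s; apply: (eq_from_nth (x0 := 0)) => // t _.
have : coord u t = coord w t; last by [].
case: (t =P j) => [->|/eqP tj]; first by rewrite e1 e2.
case: (t =P j.+1) => [->|/eqP tj1]; first by rewrite f1 f2.
by rewrite o1 ?o2.
Qed.

Lemma normc_inv n m j x s : (1 <= n)%N ->
  ((j == 0%N) || (j == m.+1) -> 0 <= x < n%:Z) ->
  normc n m j (normc n m j (x + s) - s) = x.
Proof.
move=> n1; rewrite /normc; case: ((j == 0%N) || (j == m.+1)) => H.
  rewrite modzDml (_ : x + s - s = x); last by lia.
  by apply: modz_small; apply: H.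
lia.
Qed.

Lemma rev_left n m j u v : (1 <= n)%N -> is_vertex n m u ->
  left_shift n m j u v -> right_shift n m j v u.
Proof.
move=> n1 [_ r0 rm _ _] [jm o e f]; split => //.
- by move=> t tj tj1; rewrite o.
- rewrite e normc_inv //; move=> /orP [/eqP ->|/eqP E] //.
  by move: jm; rewrite E ltnn.
- rewrite f.
  rewrite (_ : normc _ _ _ _ + 1 = normc n m j.+1 (coord u j.+1 + (-1)) - (-1)); last by rewrite opprK.
  by rewrite normc_inv //; move=> /orP [//|/eqP [->]].
Qed.

Lemma rev_right n m j u v : (1 <= n)%N -> is_vertex n m u ->
  right_shift n m j u v -> left_shift n m j v u.
Proof.
move=> n1 [_ r0 rm _ _] [jm o e f]; split => //.
- by move=> t tj tj1; rewrite o.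
- rewrite e.
  rewrite (_ : normc _ _ _ _ + 1 = normc n m j (coord u j + (-1)) - (-1)); last by rewrite opprK.
  rewrite normc_inv //; move=> /orP [/eqP ->|/eqP E] //.
  by move: jm; rewrite E ltnn.
- rewrite f normc_inv //; move=> /orP [//|/eqP [->]] //.
Qed.

Lemma vertex_Lip n m h : is_vertex n m (vert n m h) -> Lip m h.
Proof.
move=> [_ _ _ H _] c /andP [c1 cm].
have := H c; rewrite c1 cm coord_vert ltnS (leq_trans cm) // /vertf => /(_ isT).
have -> : (c == 0%N) = false by case: c c1 {cm}.
have -> : (c == m.+1) = false by apply/negbTE; rewrite neq_ltn ltnS cm.
rewrite !inE => /or3P [] /eqP ->; lia.
Qed.

Lemma lift_vert n m v : (1 <= n)%N -> is_vertex n m v -> exists h, vert n m h = v.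
Proof.
move=> n1 [sv r0 rm _ dv].
pose h c := coord v 0 + \sum_(1 <= l < c.+1) coord v l.
exists h; apply: (eq_from_nth (x0 := 0)); first by rewrite size_vert sv.
move=> c; rewrite size_vert => cm.
have -> : nth 0 (vert n m h) c = coord (vert n m h) c by [].
have -> : nth 0 v c = coord v c by [].
rewrite coord_vert cm /vertf.
case: (c =P 0%N) => [->|/eqP c0].
  by rewrite /h big_geq // addr0 modz_small.
case: (c =P m.+1) => [->|/eqP cm1].
  move: dv; rewrite (big_nth 0) sv big_nat_recr //= big_nat_recl //=.
  rewrite -/(coord v 0) -/(coord v m.+1) => dv.
  have E : - h m = coord v m.+1 - (coord v 0 + \sum_(0 <= i < m) nth 0 v i.+1 + coord v m.+1).
    rewrite /h big_add1 -pred_Sn. change (\sum_(0 <= i < m) coord v i.+1) with (\sum_(0 <= i < m) nth 0 v i.+1). lia.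
  rewrite E.
  have HS : (coord v 0 + \sum_(0 <= i < m) nth 0 v i.+1 + coord v m.+1 = 0 %[mod n])%Z.
    by apply/eqP; rewrite eqz_mod_dvd subr0.
  by rewrite -modzDmr -modzNm HS !(mod0z, oppr0) addr0 modz_small.
case: c c0 cm cm1 => // c _ cm cm1 /=.
have E : \sum_(1 <= l < c.+2) coord v l = \sum_(1 <= l < c.+1) coord v l + coord v c.+1.
  by rewrite big_nat_recr.
rewrite /h E -[RHS]/(coord v c.+1); lia.
Qed.

Lemma Dist_tri m a b c : (Dist m a c <= Dist m a b + Dist m b c)%N.
Proof.
rewrite /Dist -big_split /=; apply: leq_sum => i _; lia.
Qed.

Lemma Dist_ext m a b a' b' : (forall c, (c <= m)%N -> a c - b c = a' c - b' c) ->
  Dist m a b = Dist m a' b'.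
Proof. by move=> H; apply: eq_bigr => i _; rewrite H // -ltnS. Qed.

Lemma Dist_upd_core m a b i (s : int) : (i <= m)%N ->
  (Dist m (upd a i s) b + absz (a i - b i)%R)%N = (Dist m a b + absz (a i + s - b i)%R)%N.
Proof.
move=> im; rewrite /Dist (bigD1 (Ordinal (n:=m.+1) (m:=i) im)) //=.
rewrite [in RHS](bigD1 (Ordinal (n:=m.+1) (m:=i) im)) //= /upd eqxx.
rewrite (eq_bigr (fun c : 'I_m.+1 => absz (a c - b c))); first lia.
move=> c /negP cn; case: (c =P i :> nat) => // E; case: cn; apply/eqP/val_inj => //.
Qed.

Lemma Dist_upd m a i (s : int) : (i <= m)%N -> (s = 1 \/ s = -1) -> (Dist m a (upd a i s) <= 1)%N.
Proof.
move=> im hs; have := @Dist_upd_core m a a i (- s) im.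
have : Dist m a a = 0%N by rewrite /Dist big1 // => c _; rewrite subrr.
have E : Dist m (upd a i (- s)) a = Dist m a (upd a i s).
  by apply: Dist_ext => c _; rewrite /upd; case: (c == i) => //; lia.
rewrite E; lia.
Qed.

Lemma Dist0 m a b : Dist m a b = 0%N -> forall c, (c <= m)%N -> a c = b c.
Proof.
move=> H c cm; have := @Dist_upd_core m a b c (b c - a c) cm.
rewrite H; lia.
Qed.

Lemma vert_ext n m a b : (forall c, (c <= m)%N -> a c = b c) -> vert n m a = vert n m b.
Proof.
move=> H; apply: (eq_from_nth (x0 := 0)); rewrite ?size_vert // => c cm.
change (coord (vert n m a) c = coord (vert n m b) c).
rewrite !coord_vert cm /vertf.
case: (c =P 0%N) => [_|/eqP c0]; first by rewrite H.
case: (c =P m.+1) => [_|/eqP cm1]; first by rewrite H.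
have cm' : (c <= m)%N by move: cm cm1; lia.
by rewrite !H // (leq_trans (leq_pred c)).
Qed.

Lemma Lip_upd m a i (s : int) : Lip m a -> (i <= m)%N ->
  ((1 <= i)%N -> -1 <= a i + s - a i.-1 <= 1) ->
  ((i < m)%N -> -1 <= a i.+1 - (a i + s) <= 1) -> Lip m (upd a i s).
Proof.
move=> L im H1 H2 c /andP [c1 cm]; rewrite /upd.
case: (c =P i) => [E|/eqP ci]; case: (c.-1 =P i) => [E'|/eqP ci'].
- by move: E E' c1; lia.
- by subst c; apply: H1.
- have Ec : c = i.+1 by move: E' c1; lia.
  by subst c; apply: H2.
- by apply: L; rewrite c1 cm.
Qed.

Lemma exists_max m (P : nat -> Prop) (f : nat -> int) :
  (exists c, (c <= m)%N /\ P c) ->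
  exists i, [/\ (i <= m)%N, P i & forall c, (c <= m)%N -> P c -> f c <= f i].
Proof.
elim: m => [|m IH] [c [cm Pc]].
  exists 0%N; split => //; first by move: cm Pc; rewrite leqn0 => /eqP ->.
  by move=> d; rewrite leqn0 => /eqP ->.
case: (classic (exists c, (c <= m)%N /\ P c)) => [ex|nex].
  have [i [im Pi Hi]] := IH ex.
  case: (classic (P m.+1)) => [Pm|nPm].
    case: (lerP (f m.+1) (f i)) => fi.
      exists i; split => //; first by rewrite (leq_trans im).
      move=> d dm Pd; case: (d =P m.+1) => [->//|/eqP dn].
      by apply: Hi => //; move: dm dn; lia.
    exists m.+1; split => //.
    move=> d dm Pd; case: (d =P m.+1) => [->//|/eqP dn].
    by apply: (le_trans (Hi d _ Pd)); [move: dm dn; lia | exact: ltW].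
  exists i; split => //; first by rewrite (leq_trans im).
  move=> d dm Pd; case: (d =P m.+1) => [E|/eqP dn]; first by subst d.
  by apply: Hi => //; move: dm dn; lia.
have Pm : P m.+1.
  case: (c =P m.+1) => [<-//|/eqP cn]; case: nex; exists c; split => //; move: cm cn; lia.
exists m.+1; split => // d dm Pd; case: (d =P m.+1) => [->//|/eqP dn].
by case: nex; exists d; split => //; move: dm dn; lia.
Qed.

Lemma step m a b N : Lip m a -> Lip m b -> Dist m a b = N.+1 ->
  exists i (s : int), [/\ (i <= m)%N, s = 1 \/ s = -1, Lip m (upd a i s) & Dist m (upd a i s) b = N].
Proof.
move=> La Lb D.
case: (classic (exists c, (c <= m)%N /\ b c < a c)) => [ex|nex].
  have [i [im Pi Hi]] := @exists_max m _ a ex.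
  exists i, (-1); split => //; first by right.
  - apply: Lip_upd => // [i1|i1].
      have := La i; rewrite i1 im => /(_ isT) Hai.
      have Hn : a i.-1 <= a i.
        case: (ltP (b i.-1) (a i.-1)) => h.
          by apply: Hi => //; rewrite (leq_trans (leq_pred i)).
        have := Lb i; rewrite i1 im => /(_ isT); lia.
      lia.
    have := La i.+1; rewrite i1 /= => /(_ isT) Hai.
    have Hn : a i.+1 <= a i.
      case: (ltP (b i.+1) (a i.+1)) => h; first by apply: Hi.
      have := Lb i.+1; rewrite i1 /= => /(_ isT); lia.
    lia.
  - have := @Dist_upd_core m a b i (-1) im; rewrite D; lia.
have ex : exists c, (c <= m)%N /\ a c < b c.
  apply: NNPP => nex2.
  suff : Dist m a b = 0%N by rewrite D.
  rewrite /Dist big1 // => c _; have cm : (c <= m)%N by rewrite -ltnS.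
  have h1 : ~ (b c < a c) by move=> h; apply: nex; exists c.
  have h2 : ~ (a c < b c) by move=> h; apply: nex2; exists c.
  move: h1 h2; case: (ltgtP (a c) (b c)) => // -> _ _; by rewrite subrr.
have [i [im Pi Hi]] := @exists_max m _ (fun c => - a c) ex.
exists i, 1; split => //; first by left.
- apply: Lip_upd => // [i1|i1].
    have := La i; rewrite i1 im => /(_ isT) Hai.
    have Hn : a i <= a i.-1.
      case: (ltP (a i.-1) (b i.-1)) => h.
        have := Hi i.-1; rewrite (leq_trans (leq_pred i)) // => /(_ isT h); lia.
      have := Lb i; rewrite i1 im => /(_ isT); lia.
    lia.
  have := La i.+1; rewrite i1 /= => /(_ isT) Hai.
  have Hn : a i <= a i.+1.
    case: (ltP (a i.+1) (b i.+1)) => h; first by have := Hi i.+1 i1 h; lia.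
    have := Lb i.+1; rewrite i1 /= => /(_ isT); lia.
  lia.
- have := @Dist_upd_core m a b i 1 im; rewrite D; move: Pi => /= Pi; lia.
Qed.

Lemma build n m N : (1 <= n)%N -> forall a b, Lip m a -> Lip m b -> Dist m a b = N ->
  exists q, [/\ is_walk n m q, head [::] q = vert n m a, last [::] q = vert n m b
              & size q = N.+1].
Proof.
move=> n1; elim: N => [|N IH] a b La Lb D.
  exists [:: vert n m a]; split => //=.
  - split => //; split; last by case.
    by move=> x; rewrite inE => /eqP ->; apply: vert_vertex.
  - by apply: vert_ext; apply: Dist0.
have [i [s [im hs Lu Du]]] := @step m a b N La Lb D.
have [q [[qn [qv qa]] qh ql qs]] := IH _ _ Lu Lb Du.
exists (vert n m a :: q); split => //=.
- split => //; split.
    move=> x; rewrite inE => /orP [/eqP ->|]; [exact: vert_vertex | exact: qv].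
  case => [|k] /=.
    move=> _; case: q qn qv qa qh ql qs => // y r _ _ _ /= -> _ _.
    split; first exact: vert_vertex.
    split; first exact: vert_vertex.
    exists i; left; case: hs => ->; [left; exact: vert_left | right; exact: vert_right].
  by move=> k1; apply: qa.
- by case: q qn qv qa qh ql qs.
- by rewrite qs.
Qed.

Lemma step_label n m i x y : (1 <= n)%N -> adj n m x y ->
  exists j (s : int), [/\ (s = 1 /\ left_shift n m j x y) \/ (s = -1 /\ right_shift n m j x y),
    left_shift n m i x y -> j = i /\ s = 1 &
    ~ left_shift n m i x y -> right_shift n m i x y -> j = i /\ s = -1].
Proof.
move=> n1 [vx [vy [j H]]].
case: (classic (left_shift n m i x y)) => [Li|nLi].
  by exists i, 1; split => //; left.
case: (classic (right_shift n m i x y)) => [Ri|nRi].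
  by exists i, (-1); split => //; right.
exists j; case: H => [[L|R]|[L|R]].
- by exists 1; split => //; left.
- by exists (-1); split => //; right.
- by exists (-1); split => //; right; split => //; apply: (rev_left _ _ _ _ _ n1 vy L).
- by exists 1; split => //; left; split => //; apply: (rev_right _ _ _ _ _ n1 vy R).
Qed.

Definition d0 : nat -> int := fun _ => 0.

Lemma lift_walk n m i : (1 <= n)%N -> forall p h,
  p <> [::] -> (forall x, x \in p -> is_vertex n m x) ->
  (forall k, (k.+1 < size p)%N -> adj n m (nth [::] p k) (nth [::] p k.+1)) ->
  vert n m h = head [::] p ->
  exists hs : seq (nat -> int), [/\ size hs = size p, nth d0 hs 0 = h,
    (forall t, (t < size p)%N -> vert n m (nth d0 hs t) = nth [::] p t),
    (forall t, (t.+1 < size p)%N -> exists j (s : int), [/\ (j <= m)%N, s = 1 \/ s = -1 &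
         nth d0 hs t.+1 = upd (nth d0 hs t) j s]) &
    (forall t, (t.+1 < size p)%N ->
       (left_shift n m i (nth [::] p t) (nth [::] p t.+1) ->
          nth d0 hs t.+1 = upd (nth d0 hs t) i 1) /\
       (~ left_shift n m i (nth [::] p t) (nth [::] p t.+1) ->
        right_shift n m i (nth [::] p t) (nth [::] p t.+1) ->
          nth d0 hs t.+1 = upd (nth d0 hs t) i (-1)))].
Proof.
move=> n1; elim => [//|x p IH] h _ pv pa hx.
case: p IH pv pa hx => [|y r] IH pv pa hx.
  exists [:: h]; split => //=; by case.
have axy : adj n m x y by apply: (pa 0%N).
have [j [s [[[-> L]|[-> R]] Hi1 Hi2]]] := @step_label n m i x y n1 axy.
- have jm : (j <= m)%N by case: L.
  have vy : vert n m (upd h j 1) = y.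
    apply: (left_det _ _ _ _ _ _ (vert_left _ _ h _ jm)); first by rewrite hx.
    have [sy _ _ _ _] : is_vertex n m y by apply: pv; rewrite !inE eqxx orbT.
    by rewrite size_vert sy.
  have [hs [hs1 hs2 hs3 hs4 hs5]] := IH (upd h j 1) (fun E : y :: r = [::] => ltac:(discriminate E))
     (fun z zin => pv z (@mem_behead _ (x :: y :: r) z zin)) (fun k kl => pa k.+1 kl) vy.
  exists (h :: hs); split => //=; first by rewrite hs1.
  + by case=> [|t] //= tl; apply: hs3.
  + case=> [|t] tl /=; last by apply: hs4.
    by exists j, 1; split; [done | left | rewrite hs2].
  + case=> [|t] tl /=; last by apply: hs5.
    split; first by move=> /Hi1 [E _]; rewrite hs2 E.
    by move=> nl rr; have [_ E] := Hi2 nl rr; move: E; lia.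
- have jm : (j <= m)%N by case: R.
  have vy : vert n m (upd h j (-1)) = y.
    apply: (right_det _ _ _ _ _ _ (vert_right _ _ h _ jm)); first by rewrite hx.
    have [sy _ _ _ _] : is_vertex n m y by apply: pv; rewrite !inE eqxx orbT.
    by rewrite size_vert sy.
  have [hs [hs1 hs2 hs3 hs4 hs5]] := IH (upd h j (-1)) (fun E : y :: r = [::] => ltac:(discriminate E))
     (fun z zin => pv z (@mem_behead _ (x :: y :: r) z zin)) (fun k kl => pa k.+1 kl) vy.
  exists (h :: hs); split => //=; first by rewrite hs1.
  + by case=> [|t] //= tl; apply: hs3.
  + case=> [|t] tl /=; last by apply: hs4.
    by exists j, (-1); split; [done | right | rewrite hs2].
  + case=> [|t] tl /=; last by apply: hs5.
    split; first by move=> /Hi1 [_ E]; move: E; lia.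
    by move=> nl rr; have [E _] := Hi2 nl rr; rewrite hs2 E.
Qed.

Lemma chain m (H : nat -> nat -> int) d :
  (forall t, (t < d)%N -> (Dist m (H t) (H t.+1) <= 1)%N) ->
  forall x y, (x <= y)%N -> (y <= d)%N -> (Dist m (H x) (H y) <= y - x)%N.
Proof.
move=> Hs x; elim => [|y IH] xy yd.
  move: xy; rewrite leqn0 => /eqP ->; rewrite /Dist big1 // => c _; by rewrite subrr.
case: (x =P y.+1) => [->|/eqP ne].
  rewrite /Dist big1 // => c _; by rewrite subrr.
have xy' : (x <= y)%N by move: xy ne; lia.
have := IH xy' (ltnW yd); have := Hs y yd; have := @Dist_tri m (H x) (H y) (H y.+1).
lia.
Qed.

Lemma key n m i p : (1 <= n)%N -> is_geodesic n m p -> (i <= m)%N ->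
  forall k l, (k.+1 < size p)%N -> (l.+1 < size p)%N ->
  left_shift n m i (nth [::] p k) (nth [::] p k.+1) ->
  ~ right_shift n m i (nth [::] p k) (nth [::] p k.+1) ->
  right_shift n m i (nth [::] p l) (nth [::] p l.+1) ->
  ~ left_shift n m i (nth [::] p l) (nth [::] p l.+1) -> False.
Proof.
move=> n1 [[pn [pv pa]] pmin] im k l kl ll Lk nRk Rl nLl.
have vh : is_vertex n m (head [::] p) by case: p pn pv {pa pmin kl ll Lk nRk Rl nLl} => // x r _ pv; apply: pv; rewrite inE eqxx.
have [h0 hv] := @lift_vert n m _ n1 vh.
have [hs [hs1 hs2 hs3 hs4 hs5]] := @lift_walk n m i n1 p h0 pn pv pa hv.
pose H t := nth d0 hs t.
have [d sp] : exists d, size p = d.+1 by case: (p) pn => // x r _; exists (size r).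
have LH : forall t, (t <= d)%N -> Lip m (H t).
  move=> t td; apply: (vertex_Lip n); rewrite hs3 ?sp //; apply: pv; apply: mem_nth; rewrite sp //.
have step1 : forall t, (t < d)%N -> (Dist m (H t) (H t.+1) <= 1)%N.
  move=> t td; have [j [s [jm hs' E]]] : exists j (s : int), [/\ (j <= m)%N, s = 1 \/ s = -1 & nth d0 hs t.+1 = upd (nth d0 hs t) j s] by apply: hs4; rewrite sp.
  rewrite /H E; exact: Dist_upd.
have Ck := hs5 k kl; have Cl := hs5 l ll.
have Ek : H k.+1 = upd (H k) i 1 by apply: Ck.1.
have El : H l.+1 = upd (H l) i (-1) by apply: Cl.2.
have kd : (k < d)%N by rewrite -ltnS -sp.
have ld : (l < d)%N by rewrite -ltnS -sp.
have Dbound : (Dist m (H 0%N) (H d) <= d - 2)%N.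
  have [a [b [ab bd E]]] : exists a b, [/\ (a < b)%N, (b < d)%N &
       Dist m (H a) (H b.+1) = Dist m (H a.+1) (H b)].
    case: (ltngtP k l) => [kl'|lk'|E].
    - exists k, l; split => //; apply: Dist_ext => c _; rewrite Ek El /upd.
      by case: (c == i); lia.
    - exists l, k; split => //; apply: Dist_ext => c _; rewrite Ek El /upd.
      by case: (c == i); lia.
    - by subst l; case: nLl.
  have c1 := @chain m H d step1 _ _ (leq0n a) (leq_trans (ltnW ab) (ltnW bd)).
  have c2 := @chain m H d step1 _ _ (ab : (a.+1 <= b)%N) (ltnW bd).
  have c3 := @chain m H d step1 _ _ bd (leqnn d).
  have t1 := @Dist_tri m (H 0%N) (H a) (H d).
  have t2 := @Dist_tri m (H a) (H b.+1) (H d).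
  move: c1 c2 c3 t1 t2; rewrite E; lia.
have [q [qw qh ql qs]] := @build n m (Dist m (H 0%N) (H d)) n1 (H 0%N) (H d) (LH 0%N isT) (LH d (leqnn d)) erefl.
have := pmin q qw.
have -> : head [::] q = head [::] p.
  rewrite qh hs3 ?sp //; by case: p {pv pa pmin kl ll Lk nRk Rl nLl hs1 hs3 hs4 hs5 vh hv Ck Cl sp} pn.
have -> : last [::] q = last [::] p.
  by rewrite ql hs3 ?sp // -nth_last sp.
move=> /(_ erefl erefl); rewrite sp qs; move: Dbound kd ld; lia.
Qed.

Theorem lemma3p2 (n m : nat) (p : seq (seq int)) :
  (1 <= n)%N -> is_geodesic n m p ->
  forall i : nat, (i <= m)%N ->
    (forall k : nat, (k.+1 < size p)%N ->
       shift_at n m i (nth [::] p k) (nth [::] p k.+1) ->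
       left_shift n m i (nth [::] p k) (nth [::] p k.+1)) \/
    (forall k : nat, (k.+1 < size p)%N ->
       shift_at n m i (nth [::] p k) (nth [::] p k.+1) ->
       right_shift n m i (nth [::] p k) (nth [::] p k.+1)).
Proof.
move=> n1 g i im.
case: (classic (exists k, (k.+1 < size p)%N /\
   left_shift n m i (nth [::] p k) (nth [::] p k.+1) /\
   ~ right_shift n m i (nth [::] p k) (nth [::] p k.+1))) => [[k [kl [Lk nRk]]]|nex].
  left => l ll sh; apply: NNPP => nLl.
  have Rl : right_shift n m i (nth [::] p l) (nth [::] p l.+1) by case: sh.
  exact: (@key n m i p n1 g im k l kl ll Lk nRk Rl nLl).
right => l ll sh; apply: NNPP => nR; apply: nex; exists l; split => //.
by case: sh.
Qed.
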